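(* If $\mu\in\mathcal{L}$, then for each $x\in\mathbb{R}$ at most one element of the set $\{x+2\pi n : n\in\mathbb{Z}\}$ is an atom of $\mu$.
   Context: For a probability measure $\mu$ on $\mathbb{R}$, $G_\mu(z)=\int\frac{d\mu(x)}{z-x}$ and $F_\mu=1/G_\mu$ on the upper half-plane $\mathbb{C}^+$. $\mathcal{L}$ is the set of probability measures $\mu$ on $\mathbb{R}$ with $F_\mu(z+2\pi)=F_\mu(z)+2\pi$ for all $z\in\mathbb{C}^+$. *)

(* Defs.v *)
From HB Require Import structures.
From mathcomp Require Import all_boot all_order all_algebra.
From mathcomp Require Import all_classical all_reals all_analysis.
From mathcomp Require Import complex.
Set Implicit Arguments. Unset Strict Implicit. Unset Printing Implicit Defensive.
Import Order.TTheory GRing.Theory Num.Theory.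
Local Open Scope ring_scope.
Local Open Scope classical_set_scope.

(* Cauchy transform G_mu(z) = \int dmu(x) / (z - x), for z = a + i b:
   1/(z - x) = ((a - x) - i b) / ((a - x)^2 + b^2); the complex integral is
   taken componentwise (real and imaginary parts). *)
Definition cauchyG (R : realType) (mu : probability R R) (z : R[i]) : R[i] :=
  Complex
    (Rintegral mu setT (fun x : R =>
        ((@complex.Re R z) - x) / (((@complex.Re R z) - x) ^+ 2 + ((@complex.Im R z)) ^+ 2)))
    (Rintegral mu setT (fun x : R =>
        - (@complex.Im R z) / (((@complex.Re R z) - x) ^+ 2 + ((@complex.Im R z)) ^+ 2))).

Definition cauchyF (R : realType) (mu : probability R R) (z : R[i]) : R[i] :=
  (cauchyG mu z)^-1.

Definition classL (R : realType) (mu : probability R R) : Prop :=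
  forall z : R[i], 0 < (@complex.Im R z) ->
    cauchyF mu (z + (2 * pi)%:C%C) = cauchyF mu z + (2 * pi)%:C%C.

(* Main.v *)
Require Import Defs.
From HB Require Import structures.
From mathcomp Require Import all_boot all_order all_algebra.
From mathcomp Require Import all_classical all_reals all_analysis.
From mathcomp Require Import complex.
From mathcomp Require Import measurable_realfun ring lra.
Import Order.TTheory GRing.Theory Num.Theory numFieldNormedType.Exports.
Local Open Scope ring_scope.
Local Open Scope classical_set_scope.
Lemma im_bound (R : realType) (mu : probability R R) (a y : R) : 0 < y ->
  Rintegral mu setT (fun x => - y / ((a - x) ^+ 2 + y ^+ 2))
    <= - y^-1 * fine (mu [set a]).
Proof.
move=> y0.
set f := (fun x => _).
have hpos : forall x, 0 < (a - x) ^+ 2 + y ^+ 2.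
  by move=> x; apply: ltr_wpDl; [exact: sqr_ge0 | exact: exprn_gt0].
have cf : continuous (f : R -> R).
  move=> t.
  have h1 : {for t, continuous (fun x : R => a - x)}.
    by apply: continuousB; [exact: cst_continuous | exact: cvg_id].
  have h2 : {for t, continuous (fun x : R => (a - x) ^+ 2 + y ^+ 2)}.
    have -> : (fun x : R => (a - x) ^+ 2 + y ^+ 2) = (fun x => (a - x) * (a - x)) + (fun=> y ^+ 2).
      by apply/funext => x /=; rewrite expr2.
    apply: continuousD; last exact: cst_continuous.
    exact: continuousM.
  have h3 : {for t, continuous (fun x : R => ((a - x) ^+ 2 + y ^+ 2)^-1)}.
    by apply: continuousV => //; exact: lt0r_neq0.
  rewrite /f.
  have -> : (fun x : R => - y / ((a - x) ^+ 2 + y ^+ 2)) = (fun=> - y) \* (fun x : R => ((a - x) ^+ 2 + y ^+ 2)^-1) by [].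
  apply: continuousM => //; exact: cst_continuous.
have mf : measurable_fun setT f by exact: continuous_measurable_fun.
have muT : (mu setT < +oo)%E by rewrite probability_setT ltry.
have intf : mu.-integrable setT (EFin \o f).
  apply: measurable_bounded_integrable => //.
  exists (y^-1); split; rewrite ?num_real // => M HM x _ /=.
  apply: le_trans (ltW HM).
  rewrite /f normrM normrN normfV (gtr0_norm y0) (gtr0_norm (hpos x)).
  rewrite ler_pdivrMr ?hpos //.
  have : y^-1 * (y ^+ 2) <= y^-1 * ((a - x) ^+ 2 + y ^+ 2).
    by rewrite ler_pM2l ?invr_gt0 // lerDr sqr_ge0.
  by rewrite expr2 mulKf ?gt_eqF.
set g := fun x => - y^-1 * \1_[set a] x.
have intg : mu.-integrable setT (EFin \o g).
  apply: measurable_bounded_integrable => //.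
    apply: measurable_funM => //; exact: measurable_indic.
  exists y^-1; split; rewrite ?num_real // => M HM x _ /=.
  apply: le_trans (ltW HM).
  rewrite /g normrM normrN normfV (gtr0_norm y0).
  rewrite /indic; case: (x \in _) => /=; rewrite ?normr1 ?normr0 ?mulr1 ?mulr0 //.
  by rewrite invr_ge0 ltW.
apply: (@le_trans _ _ (Rintegral mu setT g)).
  apply: le_Rintegral => // x _.
  rewrite /g /f /indic /=.
  case: (boolP (x \in [set a])) => hx /=.
    move/set_mem: (hx) => /= ->.
    rewrite mulr1 subrr expr0n /= add0r.
    rewrite [X in X <= _](_ : _ = - y^-1) //; field; exact: lt0r_neq0.
  by rewrite mulr0 mulNr oppr_le0 divr_ge0 // ltW.
rewrite /g RintegralZl //; last exact: integrable_indic.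
rewrite /Rintegral integral_indic // setIT.
by apply: lexx.
Qed.
Lemma invRe (R : realType) (g1 g2 : R) :
  complex.Re ((Complex g1 g2)^-1) = g1 / (g1 ^+ 2 + g2 ^+ 2).
Proof. by []. Qed.

Lemma addRe (R : realType) (z w : R[i]) :
  complex.Re (z + w) = complex.Re z + complex.Re w.
Proof. by case: z; case: w. Qed.

Lemma addIm (R : realType) (z w : R[i]) :
  complex.Im (z + w) = complex.Im z + complex.Im w.
Proof. by case: z; case: w. Qed.

Lemma per_nat (R : realType) (mu : probability R R) : classL mu ->
  forall (z : R[i]) (k : nat), 0 < complex.Im z ->
  cauchyF mu (z + (2 * pi * k%:R)%:C%C) = cauchyF mu z + (2 * pi * k%:R)%:C%C.
Proof.
move=> hL z k hz; elim: k => [|k IH].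
  have c0 : (0:R)%:C%C = 0 :> R[i] by apply/eqP; rewrite eq_complex /= !eqxx.
  by rewrite mulr0n mulr0 c0 !addr0.
have e : forall r s : R, (r + s)%:C%C = r%:C%C + s%:C%C.
  by move=> r s; apply/eqP; rewrite eq_complex /= addr0 !eqxx.
have -> : 2 * pi * k.+1%:R = 2 * pi * k%:R + 2 * pi :> R by rewrite -natr1; ring.
rewrite e addrA hL; last by rewrite addIm /= addr0.
by rewrite IH addrA.
Qed.

Lemma re_bound (R : realType) (g1 g2 c y : R) : 0 < y -> 0 < c -> g2 <= - y^-1 * c ->
  `|g1 / (g1 ^+ 2 + g2 ^+ 2)| <= y / c.
Proof.
move=> y0 c0 hg.
set p := y / c.
have p0 : 0 < p by rewrite divr_gt0.
have hp : 1 <= p * (- g2).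
  have e : p * (y^-1 * c) = 1 by rewrite /p; field; rewrite !gt_eqF.
  by rewrite -e ler_pM2l //; move: hg; rewrite mulNr; lra.
have u0 : 0 < - g2.
  by rewrite -(pmulr_rgt0 _ p0) (lt_le_trans ltr01 hp).
have s0 : 0 < g1 ^+ 2 + g2 ^+ 2.
  have : 0 < g2 ^+ 2 by rewrite -sqrrN exprn_gt0.
  have := sqr_ge0 g1; lra.
rewrite normrM normfV (gtr0_norm s0) ler_pdivrMr //.
set t := `|g1|.
have t0 : 0 <= t by rewrite /t normr_ge0.
have ht : g1 ^+ 2 = t ^+ 2 by rewrite /t real_normK ?num_real.
rewrite ht.
set u := - g2 in hp u0.
have -> : g2 ^+ 2 = u ^+ 2 by rewrite /u sqrrN.
have htu : t * u <= t ^+ 2 + u ^+ 2 by nra.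
have : t <= t * (p * u) by rewrite -{1}(mulr1 t) ler_wpM2l.
move/le_trans; apply.
by rewrite mulrCA; apply: ler_wpM2l => //; exact: ltW.
Qed.

Lemma reF_bound (R : realType) (mu : probability R R) (a y : R) :
  0 < y -> 0 < fine (mu [set a]) ->
  `|complex.Re (cauchyF mu (Complex a y))| <= y / fine (mu [set a]).
Proof.
move=> y0 c0.
rewrite /cauchyF /cauchyG invRe /=.
apply: re_bound => //.
exact: im_bound.
Qed.

Theorem corollary4p13 (R : realType) (mu : probability R R) :
  classL mu ->
  forall x : R, forall n m : int,
    (0 < mu [set (x + 2 * pi * n%:~R)%R])%E ->
    (0 < mu [set (x + 2 * pi * m%:~R)%R])%E ->
    n = m.
Proof.
move=> hL x n m.
wlog: n m / (n < m)%R.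
  move=> H hn hm; case: (ltgtP n m) => // h; [exact: H | symmetry; exact: H].
move=> nm hn hm; exfalso.
have [k hk] : exists k : nat, m = n + k%:Z.
  exists (`|m - n|%N); rewrite gez0_abs ?subr_ge0 ?ltW //.
  by rewrite [n + _]addrC subrK.
have k1 : (1 <= k)%N.
  by move: nm; rewrite hk ltrDl; case: k {hk}.
set a1 := x + 2 * pi * n%:~R.
have ha2 : x + 2 * pi * m%:~R = a1 + 2 * pi * k%:R.
  by rewrite hk intrD /a1 mulrDr addrA.
rewrite ha2 in hm.
have fin : forall b : R, (mu [set b] < +oo)%E.
  move=> b; apply: (le_lt_trans (probability_le1 mu _)) => //; exact: ltry.
set c1 := fine (mu [set a1]).
set c2 := fine (mu [set a1 + 2 * pi * k%:R]).
have c10 : 0 < c1 by apply: fine_gt0; rewrite hn fin.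
have c20 : 0 < c2 by apply: fine_gt0; rewrite hm fin.
set y := Num.min c1 c2 / 2.
have y0 : 0 < y by rewrite divr_gt0 // lt_min c10 c20.
have m1 : Num.min c1 c2 <= c1 by rewrite ge_min lexx.
have m2 : Num.min c1 c2 <= c2 by rewrite ge_min lexx orbT.
have yc1 : y / c1 <= 1 / 2 by rewrite ler_pdivrMr // /y; lra.
have yc2 : y / c2 <= 1 / 2 by rewrite ler_pdivrMr // /y; lra.
have b1 := @reF_bound R mu a1 y y0 c10.
have b2 := @reF_bound R mu (a1 + 2 * pi * k%:R) y y0 c20.
have e : Complex (a1 + 2 * pi * k%:R) y = Complex a1 y + (2 * pi * k%:R)%:C%C.
  by apply/eqP; rewrite eq_complex /= addr0 !eqxx.
have reC : forall r : R, complex.Re (r%:C%C) = r by [].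
rewrite e per_nat // addRe (reC (2 * pi * k%:R)) in b2.
rewrite -/c1 in b1; rewrite -/c2 in b2.
have kR : 1 <= k%:R :> R by rewrite ler1n.
have hP : pi <= pi * k%:R :> R.
  rewrite -{1}(mulr1 (pi : R)); apply: ler_wpM2l => //; exact: pi_ge0.
have hpi := @pi_ge2 R.
set r1 := complex.Re (cauchyF mu (a1 +i* y)%C) in b1 b2.
rewrite -mulrA in b2; set P := pi * k%:R in b2 hP.
move/ler_normlP: b1 => [b1a b1b].
move/ler_normlP: b2 => [b2a b2b].
have h1 := le_trans b1a yc1; have h2 := le_trans b2b yc2.
clear -h1 h2 hP hpi; lra.
Qed.
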